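(* Let $q'>0$, $e'=0$, $q_{\max}>0$, $\mathcal D''_1=\{e:0\le e\le1\}$, $\mathcal D_2=\{(q,\omega):0<q\le q_{\max},\ 0\le\omega\le\pi/2\}$. For each $(q,\omega)\in\mathcal D_2$, $$\min_{e\in\mathcal D''_1}\delta_{\rm nod}=\max\Big\{0,\ q'-\frac{2q}{1-\cos\omega},\ q-q'\Big\},\qquad \max_{e\in\mathcal D''_1}\delta_{\rm nod}=\max\Big\{q'-q,\ \frac{2q}{1+\cos\omega}-q'\Big\}.$$
   Context: Here the trajectory $\mathcal A'$ is a circle of radius $q'$ ($e'=0$), so $r'_+=r'_-=q'$. For $q>0$, $e\in[0,1]$, $\omega$ an angle, define $r_{\pm}=\frac{q(1+e)}{1\pm e\cos\omega}$ (extended-real value $+\infty$ when the denominator vanishes; $\frac{2q}{1-\cos\omega}=+\infty$ at $\omega=0$), $d^\pm=q'-r_\pm$, and the nodal distance $\delta_{\rm nod}(q,e,\omega)=\min\{|d^+|,|d^-|\}$. *)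

(* Defs.v *)
(* classical reals. Extended-real values +infinity are
   represented by [None : option R]; [Some x] is the finite value x. *)
From Stdlib Require Import Reals.
Open Scope R_scope.

(* a / b as an extended real, with value +infinity when b = 0
   (only used with a > 0, b >= 0). *)
Definition ediv (a b : R) : option R :=
  if Req_EM_T b 0 then None else Some (a / b).

Definition r_plus (q e w : R) : option R := ediv (q * (1 + e)) (1 + e * cos w).
Definition r_minus (q e w : R) : option R := ediv (q * (1 + e)) (1 - e * cos w).

Definition abs_d (q' : R) (r : option R) : option R :=
  match r with None => None | Some x => Some (Rabs (q' - x)) end.

Definition emin (a b : option R) : option R :=
  match a, b with
  | None, _ => b
  | _, None => a
  | Some x, Some y => Some (Rmin x y)
  end.

Definition ege (a : option R) (x : R) : Prop :=
  match a with None => True | Some y => x <= y end.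

(* nodal distance for the circular trajectory A' of radius q' *)
Definition delta_nod (q' q e w : R) : option R :=
  emin (abs_d q' (r_plus q e w)) (abs_d q' (r_minus q e w)).

Definition is_min_on_01 (f : R -> option R) (m : R) : Prop :=
  (exists e, 0 <= e <= 1 /\ f e = Some m) /\
  (forall e, 0 <= e <= 1 -> ege (f e) m).

Definition is_max_on_01 (f : R -> option R) (m : R) : Prop :=
  (exists e, 0 <= e <= 1 /\ f e = Some m) /\
  (forall e, 0 <= e <= 1 -> exists y, f e = Some y /\ y <= m).

(* Main.v *)
Require Import Defs.
From Stdlib Require Import Reals Lra.
Open Scope R_scope.

Lemma Rdiv_le_0_compat (a b : R) : 0 <= a -> 0 < b -> 0 <= a / b.
Proof. intros. unfold Rdiv. apply Rmult_le_pos; [lra|]. left; apply Rinv_0_lt_compat; lra. Qed.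

Lemma le_div (x d y : R) : 0 < d -> x <= y * d -> x / d <= y.
Proof.
  intros Hd H. apply Rmult_le_reg_r with d; [lra|].
  unfold Rdiv. rewrite Rmult_assoc, Rinv_l by lra. lra.
Qed.

Lemma div_ge (x d y : R) : 0 < d -> y * d <= x -> y <= x / d.
Proof.
  intros Hd H. apply Rmult_le_reg_r with d; [lra|].
  unfold Rdiv. rewrite Rmult_assoc, Rinv_l by lra. lra.
Qed.

Lemma delta_eq q' q e w : 1 + e * cos w <> 0 ->
  delta_nod q' q e w =
  if Req_EM_T (1 - e * cos w) 0
  then Some (Rabs (q' - q * (1 + e) / (1 + e * cos w)))
  else Some (Rmin (Rabs (q' - q * (1 + e) / (1 + e * cos w)))
                  (Rabs (q' - q * (1 + e) / (1 - e * cos w)))).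
Proof.
  intros H. unfold delta_nod, r_plus, r_minus, ediv.
  destruct (Req_EM_T (1 + e * cos w) 0); [contradiction|].
  destruct (Req_EM_T (1 - e * cos w) 0); reflexivity.
Qed.

Section S.
Variables (c q q' : R).
Hypotheses (Hc0 : 0 <= c) (Hc1 : c <= 1) (Hq : 0 < q) (Hq' : 0 < q').

Lemma P_ge e : 0 <= e <= 1 -> q <= q * (1 + e) / (1 + e * c).
Proof. intros He. assert (0 <= (q*e)*(1-c)) by (apply Rmult_le_pos; nra).
  assert (0 <= e*c) by nra. apply div_ge; nra. Qed.

Lemma P_le e : 0 <= e <= 1 -> q * (1 + e) / (1 + e * c) <= 2 * q / (1 + c).
Proof.
  intros He. apply le_div; [nra|].
  set (Y := 2 * q / (1 + c)).
  assert (HY : Y * (1 + c) = 2 * q) by (unfold Y; field; lra).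
  assert (0 <= (1 - c) * (1 - e)) by nra.
  assert (0 <= Y) by (unfold Y; apply Rdiv_le_0_compat; lra).
  nra.
Qed.

Lemma M_ge e : 0 <= e <= 1 -> 0 < 1 - e * c -> q <= q * (1 + e) / (1 - e * c).
Proof. intros He Hd. assert (0 <= (q*e)*(1+c)) by (apply Rmult_le_pos; nra).
  apply div_ge; nra. Qed.

Lemma PM e : 0 <= e <= 1 -> 0 < 1 - e * c ->
  q * (1 + e) / (1 + e * c) <= q * (1 + e) / (1 - e * c).
Proof.
  intros He Hd. apply le_div; [nra|].
  set (M := q * (1 + e) / (1 - e * c)).
  assert (HM : M * (1 - e * c) = q * (1 + e)) by (unfold M; field; lra).
  assert (q <= M) by (apply M_ge; auto).
  assert (0 <= M * (e * c)) by (apply Rmult_le_pos; nra).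
  nra.
Qed.

Lemma M_le e : 0 <= e <= 1 -> c < 1 ->
  q * (1 + e) / (1 - e * c) <= 2 * q / (1 - c).
Proof.
  intros He Hc. apply le_div; [nra|].
  set (X := 2 * q / (1 - c)).
  assert (HX : X * (1 - c) = 2 * q) by (unfold X; field; lra).
  assert (0 <= (1 + c) * (1 - e)) by nra.
  assert (0 <= X) by (unfold X; apply Rdiv_le_0_compat; lra).
  nra.
Qed.

Lemma zero_pt : q <= q' -> q' * (1 - c) <= 2 * q ->
  let e0 := (q' - q) / (q + q' * c) in
  0 <= e0 <= 1 /\ 0 < 1 - e0 * c /\ q * (1 + e0) / (1 - e0 * c) = q'.
Proof.
  intros H1 H2 e0.
  assert (Hd : 0 < q + q' * c) by nra.
  assert (E : 1 - e0 * c = q * (1 + c) / (q + q' * c)) by (unfold e0; field; lra).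
  assert (0 < q * (1 + c) / (q + q' * c)) by (apply Rdiv_lt_0_compat; nra).
  split; [split|split].
  - unfold e0; apply Rdiv_le_0_compat; lra.
  - unfold e0; apply le_div; lra.
  - lra.
  - rewrite E. unfold e0. field. nra.
Qed.
End S.

Lemma abs_lb1 q q' x : q <= x -> Rmax 0 (q - q') <= Rabs (q' - x).
Proof.
  intros. unfold Rmax, Rabs; destruct (Rle_dec 0 (q - q')); destruct (Rcase_abs _); lra.
Qed.

Lemma abs_lb2 q q' X x : q <= x -> x <= X ->
  Rmax 0 (Rmax (q' - X) (q - q')) <= Rabs (q' - x).
Proof.
  intros. unfold Rmax, Rabs;
  repeat match goal with |- context [Rle_dec ?a ?b] => destruct (Rle_dec a b) end;
  destruct (Rcase_abs _); lra.
Qed.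

Lemma abs_ub q q' Y x : q <= x -> x <= Y ->
  Rabs (q' - x) <= Rmax (q' - q) (Y - q').
Proof.
  intros. unfold Rmax, Rabs;
  repeat match goal with |- context [Rle_dec ?a ?b] => destruct (Rle_dec a b) end;
  destruct (Rcase_abs _); lra.
Qed.

Theorem proposition8 (q' qmax q w : R) :
  0 < q' -> 0 < qmax ->
  0 < q <= qmax -> 0 <= w <= PI / 2 ->
  is_min_on_01 (fun e => delta_nod q' q e w)
    (match ediv (2 * q) (1 - cos w) with
     | None => Rmax 0 (q - q')                      (* q' - (+infinity) = -infinity *)
     | Some x => Rmax 0 (Rmax (q' - x) (q - q'))
     end) /\
  is_max_on_01 (fun e => delta_nod q' q e w)
    (Rmax (q' - q) (2 * q / (1 + cos w) - q')).
Proof.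
  intros Hq' _ [Hq _] Hw.
  assert (Hc0 : 0 <= cos w) by (apply cos_ge_0; pose proof PI_RGT_0; lra).
  assert (Hc1 : cos w <= 1) by (pose proof (COS_bound w); lra).
  set (c := cos w) in *.
  assert (Hqc : 0 <= q * c) by (apply Rmult_le_pos; lra).
  assert (Hqc1 : 0 <= q * (1 - c)) by (apply Rmult_le_pos; lra).
  assert (Dp : forall e, 0 <= e <= 1 -> 1 + e * c <> 0) by (intros; nra).
  split.
  - unfold ediv. destruct (Req_EM_T (1 - c) 0) as [E|E].
    + split.
      * destruct (Rle_lt_dec q q') as [Hle|Hlt].
        -- destruct (zero_pt c q q' Hc0 Hq Hq' Hle ltac:(nra)) as (He & Hd & Hv).
           set (e0 := (q' - q) / (q + q' * c)) in *.
           exists e0. split; [exact He|].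
           rewrite delta_eq by (apply Dp; auto). fold c.
           destruct (Req_EM_T (1 - e0 * c) 0); [lra|].
           rewrite Hv, Rminus_diag, Rabs_R0. f_equal.
           rewrite Rmin_right by apply Rabs_pos.
           unfold Rmax; destruct (Rle_dec 0 (q - q')); lra.
        -- exists 0. split; [lra|].
           rewrite delta_eq by (apply Dp; lra). fold c.
           replace (1 - 0 * c) with 1 by ring. replace (1 + 0 * c) with 1 by ring.
           destruct (Req_EM_T 1 0); [lra|].
           replace (q * (1 + 0) / 1) with q by field. rewrite Rmin_left by lra.
           f_equal. rewrite Rabs_left by lra.
           unfold Rmax; destruct (Rle_dec 0 (q - q')); lra.
      * intros e He. rewrite delta_eq by (apply Dp; auto). fold c. simpl.
        destruct (Req_EM_T (1 - e * c) 0).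
        -- apply abs_lb1, P_ge; auto.
        -- apply Rmin_glb; apply abs_lb1; [apply P_ge; auto|apply M_ge; auto].
           nra.
    + assert (Hc : c < 1) by lra.
      split.
      * destruct (Rlt_le_dec q' q) as [Hlt|Hle].
        -- exists 0. split; [lra|].
           rewrite delta_eq by (apply Dp; lra). fold c.
           replace (1 - 0 * c) with 1 by ring. replace (1 + 0 * c) with 1 by ring.
           destruct (Req_EM_T 1 0); [lra|].
           replace (q * (1 + 0) / 1) with q by field. rewrite Rmin_left by lra.
           f_equal. rewrite Rabs_left by lra.
           assert (q <= 2 * q / (1 - c)) by (apply div_ge; lra).
           unfold Rmax; repeat match goal with |- context [Rle_dec ?a ?b] => destruct (Rle_dec a b) | H : context [Rle_dec ?a ?b] |- _ => destruct (Rle_dec a b) end; lra.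
        -- destruct (Rle_lt_dec (q' * (1 - c)) (2 * q)) as [H2|H2].
           ++ destruct (zero_pt c q q' Hc0 Hq Hq' Hle H2) as (He & Hd & Hv).
              set (e0 := (q' - q) / (q + q' * c)) in *.
              exists e0. split; [exact He|].
              rewrite delta_eq by (apply Dp; auto). fold c.
              destruct (Req_EM_T (1 - e0 * c) 0); [lra|].
              rewrite Hv, Rminus_diag, Rabs_R0. f_equal.
              rewrite Rmin_right by apply Rabs_pos.
              assert (q' <= 2 * q / (1 - c)) by (apply div_ge; lra).
              unfold Rmax; repeat match goal with |- context [Rle_dec ?a ?b] => destruct (Rle_dec a b) | H : context [Rle_dec ?a ?b] |- _ => destruct (Rle_dec a b) end; lra.
           ++ exists 1. split; [lra|].
              rewrite delta_eq by (apply Dp; lra). fold c.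
              destruct (Req_EM_T (1 - 1 * c) 0); [lra|].
              replace (1 - 1 * c) with (1 - c) by ring.
              replace (q * (1 + 1)) with (2 * q) by ring.
              assert (HX : 2 * q / (1 - c) < q') by (apply Rmult_lt_reg_r with (1 - c); [lra|];
                 unfold Rdiv; rewrite Rmult_assoc, Rinv_l by lra; lra).
              assert (HP : 2 * q / (1 + 1 * c) <= 2 * q / (1 - c)).
              { pose proof (PM c q Hc0 Hq 1 ltac:(lra) ltac:(lra)) as HH.
                replace (q * (1 + 1)) with (2 * q) in HH by ring.
                replace (1 - 1 * c) with (1 - c) in HH by ring. exact HH. }
              rewrite (Rabs_right (q' - 2 * q / (1 + 1 * c))) by lra.
              rewrite (Rabs_right (q' - 2 * q / (1 - c))) by lra.
              rewrite Rmin_right by lra. f_equal.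
              assert (q' - 2 * q / (1 - c) >= q - q') by
               (assert (q <= 2 * q / (1 - c)) by (apply div_ge; lra); lra).
              unfold Rmax; repeat match goal with |- context [Rle_dec ?a ?b] => destruct (Rle_dec a b) | H : context [Rle_dec ?a ?b] |- _ => destruct (Rle_dec a b) end; lra.
      * intros e He. rewrite delta_eq by (apply Dp; auto). fold c. simpl.
        destruct (Req_EM_T (1 - e * c) 0); [nra|].
        assert (Hd : 0 < 1 - e * c) by nra.
        pose proof (M_le c q Hc0 Hc1 Hq e He Hc).
        pose proof (PM c q Hc0 Hq e He Hd).
        apply Rmin_glb; eapply abs_lb2;
          [apply P_ge; auto| lra | apply M_ge; auto | lra].
  - split.
    + set (Y := 2 * q / (1 + c)).
      assert (HYq : q <= Y) by (unfold Y; apply div_ge; lra).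
      destruct (Rle_lt_dec (Y - q') (q' - q)) as [H|H].
      * exists 0. split; [lra|].
        rewrite delta_eq by (apply Dp; lra). fold c.
        replace (1 - 0 * c) with 1 by ring. replace (1 + 0 * c) with 1 by ring.
        destruct (Req_EM_T 1 0); [lra|].
        replace (q * (1 + 0) / 1) with q by field. rewrite Rmin_left by lra.
        f_equal. rewrite Rabs_right by lra.
        unfold Rmax; destruct (Rle_dec (q' - q) (Y - q')); lra.
      * exists 1. split; [lra|].
        rewrite delta_eq by (apply Dp; lra). fold c.
        replace (q * (1 + 1) / (1 + 1 * c)) with Y by (unfold Y; field; lra).
        assert (Rmax (q' - q) (Y - q') = Y - q') by
          (unfold Rmax; destruct (Rle_dec (q' - q) (Y - q')); lra).
        rewrite H0.
        rewrite (Rabs_left1 (q' - Y)) by lra.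
        destruct (Req_EM_T (1 - 1 * c) 0); [f_equal; lra|].
        assert (Hd : 0 < 1 - 1 * c) by lra.
        pose proof (PM c q Hc0 Hq 1 ltac:(lra) Hd) as HH.
        replace (q * (1 + 1) / (1 + 1 * c)) with Y in HH by (unfold Y; field; lra).
        rewrite (Rabs_left1 (q' - q * (1 + 1) / (1 - 1 * c))) by lra.
        rewrite Rmin_left by lra. f_equal; lra.
    + intros e He. rewrite delta_eq by (apply Dp; auto). fold c.
      assert (U : Rabs (q' - q * (1 + e) / (1 + e * c)) <= Rmax (q' - q) (2 * q / (1 + c) - q'))
        by (apply abs_ub; [apply P_ge|apply P_le]; auto).
      destruct (Req_EM_T (1 - e * c) 0).
      * eexists; split; [reflexivity|exact U].
      * eexists; split; [reflexivity|]. eapply Rle_trans; [apply Rmin_l|exact U].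
Qed.
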